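(* Let $\mathcal{D}\subseteq\mathbb{R}^m$ be a nonempty polyhedron, $c,d\in\mathbb{R}^m$, and $f(\delta):=\inf_{x\in\mathcal{D}}(c-\delta d)^\top x$. Assume that there exists $\delta'\in\operatorname{dom}(f)$ such that $f(\delta')=(c-\delta'd)^\top x'\le0$ for some $x'\in\mathcal{D}$ with $d^\top x'>0$. If $f$ has a root, then the optimal value of the problem $\inf\ c^\top x/d^\top x$ subject to $d^\top x>0$, $x\in\mathcal{D}$, equals the largest root of $f$ and is attained. Otherwise, this optimal value is $-\infty$.
   Context: $\operatorname{dom}(f):=\{\delta: -\infty<f(\delta)<\infty\}$. *)

(* Defs.v *)
From HB Require Import structures.
From mathcomp Require Import all_boot all_order all_algebra.
From mathcomp Require Import all_classical all_reals ereal.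
Set Implicit Arguments. Unset Strict Implicit. Unset Printing Implicit Defensive.
Import Order.TTheory GRing.Theory Num.Theory.
Local Open Scope ring_scope.
Local Open Scope classical_set_scope.

Definition dotv (R : realType) (m : nat) (u x : 'cV[R]_m) : R :=
  \sum_(i < m) u i 0 * x i 0.

Definition is_polyhedron (R : realType) (m : nat) (D : set 'cV[R]_m) : Prop :=
  exists (k : nat) (A : 'M[R]_(k, m)) (b : 'cV[R]_k),
    D = [set x | forall i : 'I_k, (A *m x) i 0 <= b i 0].

Definition fpar (R : realType) (m : nat) (D : set 'cV[R]_m) (c d : 'cV[R]_m)
  (delta : R) : \bar R :=
  ereal_inf [set (dotv (c - delta *: d) x)%:E | x in D].

Definition in_dom (R : realType) (F : R -> \bar R) (delta : R) : Prop :=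
  (-oo < F delta)%E /\ (F delta < +oo)%E.

Definition ratio_opt (R : realType) (m : nat) (D : set 'cV[R]_m) (c d : 'cV[R]_m)
  : \bar R :=
  ereal_inf [set (dotv c x / dotv d x)%:E | x in [set x | D x /\ 0 < dotv d x]].

(* Main.v *)
Require Import Defs.
From HB Require Import structures.
From mathcomp Require Import all_boot all_order all_algebra.
From mathcomp Require Import all_classical all_reals ereal.
From mathcomp Require Import ring lra.
Import Order.TTheory GRing.Theory Num.Theory.
Local Open Scope ring_scope.
Local Open Scope classical_set_scope.

Section LP.
Variables (R : realType) (E : Type) (comb : E -> E -> R -> E).
Definition affn (h : E -> R) := forall x y t, h (comb x y t) = (1-t) * h x + t * h y.
Definition affs (V : E -> Prop) := forall x y t, V x -> V y -> V (comb x y t).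

Lemma LPattain (I : eqType) (g : I -> E -> R) (phi : E -> R) (s : seq I) :
  affn phi -> (forall i, affn (g i)) ->
  forall V, affs V ->
  (exists x, V x /\ forall i, i \in s -> g i x <= 0) ->
  (exists M, forall x, (V x /\ forall i, i \in s -> g i x <= 0) -> M <= phi x) ->
  exists z, (V z /\ forall i, i \in s -> g i z <= 0) /\
     forall x, (V x /\ forall i, i \in s -> g i x <= 0) -> phi z <= phi x.
Proof.
move=> aphi ag; elim: s => [|i s IH] V aV [x0 Px0] [M HM].
  exists x0; split => // x [Vx _].
  case: (lerP (phi x0) (phi x)) => // hlt; exfalso.
  have hM0 : M <= phi x0 by apply: HM.
  set t := (phi x0 - M + 1) / (phi x0 - phi x).
  have hd : 0 < phi x0 - phi x by rewrite subr_gt0.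
  have := HM (comb x0 x t) (conj (aV _ _ _ Px0.1 Vx) (fun i (H : i \in [::]) => False_ind _ (notF H))).
  rewrite aphi.
  have -> : (1 - t) * phi x0 + t * phi x = phi x0 - t * (phi x0 - phi x) by ring.
  rewrite /t mulfVK ?gt_eqF //; lra.
set Q := fun x => V x /\ forall j, j \in s -> g j x <= 0.
have PQ : forall x, (V x /\ forall j, j \in i :: s -> g j x <= 0) -> Q x.
  by move=> x [Vx H]; split => // j js; apply: H; rewrite inE js orbT.
have [y [Qy Hy]] : exists y, Q y /\ forall x, (V x /\ forall j, j \in i :: s -> g j x <= 0) -> phi y <= phi x.
  have [[M' HM']|nb] := pselect (exists M', forall x, Q x -> M' <= phi x).
    have [y [Qy Hy]] := IH V aV (ex_intro _ x0 (PQ _ Px0)) (ex_intro _ M' HM').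
    by exists y; split => // x Px; apply: Hy; apply: PQ.
  have [y [Qy Hy]] : exists y, Q y /\ phi y < M.
    apply: contra_notP nb => H; exists M => x Qx.
    by rewrite leNgt; apply/negP => hlt; apply: H; exists x.
  by exists y; split => // x Px; apply: ltW; apply: (lt_le_trans Hy); apply: HM.
case: (lerP (g i y) 0) => giy.
  exists y; split.
    by split; [exact: Qy.1 | move=> j; rewrite inE => /orP [/eqP -> //| js]; apply: Qy.2].
  exact: Hy.
set V' := fun x => V x /\ g i x = 0.
have aV' : affs V'.
  by move=> a b t [Va ga] [Vb gb]; split; [exact: aV | rewrite ag ga gb; ring].
have cross : forall x, (V x /\ forall j, j \in i :: s -> g j x <= 0) ->
    exists w, (V' w /\ forall j, j \in s -> g j w <= 0) /\ phi w <= phi x.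
  move=> x [Vx Hx].
  have gix : g i x <= 0 by apply: Hx; rewrite inE eqxx.
  set t := g i x / (g i x - g i y).
  have hd : g i x - g i y < 0 by lra.
  have t0 : 0 <= t.
    have -> : t = (- g i x) / (- (g i x - g i y)) by rewrite /t invrN mulrN mulNr opprK.
    by apply: divr_ge0; lra.
  have t1 : t <= 1.
    rewrite /t ler_ndivrMr //; lra.
  exists (comb x y t); split; first split; first split.
  - by apply: aV => //; exact: Qy.1.
  - rewrite ag /t.
    have -> : forall a b c : R, (1 - c) * a + c * b = a - c * (a - b) by move=> *; ring.
    by rewrite mulfVK ?ltr0_neq0 // subrr.
  - move=> j js; rewrite ag.
    have gjx : g j x <= 0 by apply: Hx; rewrite inE js orbT.
    have gjy : g j y <= 0 := Qy.2 j js.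
    nra.
  - rewrite aphi; have := Hy x (conj Vx Hx); nra.
have [x1 [P'x1 _]] := cross x0 Px0.
have PP : forall x, (V' x /\ forall j, j \in s -> g j x <= 0) ->
    (V x /\ forall j, j \in i :: s -> g j x <= 0).
  move=> x [[Vx gx] Hx]; split => // j; rewrite inE => /orP [/eqP -> | js].
    by rewrite gx.
  exact: Hx.
have [z [P'z Hz]] := IH V' aV' (ex_intro _ x1 P'x1)
   (ex_intro _ M (fun x P'x => HM x (PP x P'x))).
exists z; split; first exact: PP.
move=> x Px; have [w [P'w hw]] := cross x Px.
exact: le_trans (Hz w P'w) hw.
Qed.
End LP.
Arguments affn {R E}.
Arguments affs {R E}.
Arguments LPattain {R E comb I g phi s}.

Section Main.
Variables (R : realType) (m : nat).

Lemma dotvD (u x y : 'cV[R]_m) : dotv u (x + y) = dotv u x + dotv u y.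
Proof. by rewrite /dotv -big_split; apply: eq_bigr => i _; rewrite !mxE mulrDr. Qed.

Lemma dotvZ (u x : 'cV[R]_m) a : dotv u (a *: x) = a * dotv u x.
Proof. by rewrite /dotv mulr_sumr; apply: eq_bigr => i _; rewrite !mxE mulrCA. Qed.

Lemma dotv_subl (c d x : 'cV[R]_m) r : dotv (c - r *: d) x = dotv c x - r * dotv d x.
Proof.
rewrite /dotv mulr_sumr -sumrB; apply: eq_bigr => i _; rewrite !mxE; ring.
Qed.

Lemma AmxD k (A : 'M[R]_(k, m)) (x y : 'cV[R]_m) i : (A *m (x + y)) i 0 = (A *m x) i 0 + (A *m y) i 0.
Proof. by rewrite mulmxDr mxE. Qed.

Lemma AmxZ k (A : 'M[R]_(k, m)) a (x : 'cV[R]_m) i : (A *m (a *: x)) i 0 = a * (A *m x) i 0.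
Proof. by rewrite -scalemxAr mxE. Qed.

End Main.

Theorem lemma3p9 (R : realType) (m : nat) (D : set 'cV[R]_m) (c d : 'cV[R]_m) :
  is_polyhedron D -> D !=set0 ->
  (exists (delta' : R) (x' : 'cV[R]_m),
      in_dom (fpar D c d) delta' /\ D x' /\ 0 < dotv d x' /\
      fpar D c d delta' = (dotv (c - delta' *: d) x')%:E /\
      dotv (c - delta' *: d) x' <= 0) ->
  ((exists r : R, fpar D c d r = (0:R)%:E) ->
     exists rs : R,
       fpar D c d rs = (0:R)%:E /\
       (forall r : R, fpar D c d r = (0:R)%:E -> r <= rs) /\
       ratio_opt D c d = rs%:E /\
       (exists x : 'cV[R]_m, D x /\ 0 < dotv d x /\ dotv c x / dotv d x = rs)) /\
  (~ (exists r : R, fpar D c d r = (0:R)%:E) -> ratio_opt D c d = -oo%E).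
Proof.
move=> [k [A [b HD]]] _ [dl [xp [_ [Dxp [dxp [fdl hF]]]]]].
set g := fun x => dotv c x / dotv d x.
have Flb : forall x, D x -> dotv (c - dl *: d) xp <= dotv (c - dl *: d) x.
  move=> x Dx; rewrite -lee_fin -fdl; apply: ereal_inf_lbound; by exists x.
have gxp : g xp <= dl.
  rewrite /g ler_pdivrMr //; move: hF; rewrite dotv_subl; lra.
have rec : forall y, dotv d y = 1 -> (forall i, (A *m y) i 0 <= 0) -> dl <= dotv c y.
  move=> y dy Ay.
  have Dy : D (xp + y).
    rewrite HD /= => i; rewrite AmxD.
    have : (A *m xp) i 0 <= b i 0 by move: Dxp; rewrite HD => /(_ i).
    have := Ay i; lra.
  have := Flb _ Dy; rewrite !dotv_subl dotvD dotvD dy; lra.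
have key : (exists M, forall x, D x -> 0 < dotv d x -> M <= g x) ->
    exists z, (D z /\ 0 < dotv d z) /\ forall x, D x -> 0 < dotv d x -> g z <= g x.
  move=> [M HM].
  pose comb := fun (p q : 'cV[R]_m * R) (t : R) =>
     ((1-t) *: p.1 + t *: q.1, (1-t) * p.2 + t * q.2).
  pose gf := fun (o : option 'I_k) (p : 'cV[R]_m * R) =>
     match o with Some i => (A *m p.1) i 0 - p.2 * b i 0 | None => - p.2 end.
  pose phi := fun p : 'cV[R]_m * R => dotv c p.1.
  pose V := fun p : 'cV[R]_m * R => dotv d p.1 = 1.
  pose sI := enum {: option 'I_k}.
  have aphi : affn comb phi.
    by move=> p q t; rewrite /phi /= dotvD !dotvZ.
  have ag : forall o, affn comb (gf o).
    move=> [i|] p q t; rewrite /gf /=; last by ring.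
    rewrite AmxD !AmxZ; ring.
  have aV : affs comb V.
    by move=> p q t; rewrite /V /= dotvD !dotvZ => -> ->; ring.
  pose px := fun x : 'cV[R]_m => ((dotv d x)^-1 *: x, (dotv d x)^-1).
  have Qpx : forall x, D x -> 0 < dotv d x ->
      V (px x) /\ (forall o, o \in sI -> gf o (px x) <= 0).
    move=> x Dx dx; split.
      by rewrite /V /= dotvZ mulVf ?gt_eqF.
    move=> [i|] _ /=; last by rewrite oppr_le0 invr_ge0 ltW.
    rewrite AmxZ -mulrBr; apply: mulr_ge0_le0; first by rewrite invr_ge0 ltW.
    by rewrite subr_le0; move: Dx; rewrite HD => /(_ i).
  have phipx : forall x, phi (px x) = g x.
    by move=> x; rewrite /phi /g /= dotvZ mulrC.
  have inQ : forall y t, (V (y, t) /\ forall o, o \in sI -> gf o (y, t) <= 0) ->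
      0 <= t /\ forall i, (A *m y) i 0 <= t * b i 0.
    move=> y t [_ Hy]; split.
      by have := Hy None (mem_enum _ _); rewrite /gf /= oppr_le0.
    by move=> i; have := Hy (Some i) (mem_enum _ _); rewrite /gf /= subr_le0 mulrC.
  have fromQ : forall y t, 0 < t -> V (y, t) -> (forall i, (A *m y) i 0 <= t * b i 0) ->
      (D (t^-1 *: y) /\ 0 < dotv d (t^-1 *: y)) /\ g (t^-1 *: y) = dotv c y.
    move=> y t tp Vy Ay; split; first split.
    - rewrite HD /= => i; rewrite AmxZ mulrC -/(_ / t) ler_pdivrMr // mulrC; exact: Ay.
    - by rewrite dotvZ /V /= in Vy *; rewrite Vy mulr1 invr_gt0.
    - rewrite /g !dotvZ; rewrite /V /= in Vy; rewrite Vy; field; exact: lt0r_neq0.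
  have t0case : forall y, V (y, 0) -> (forall i, (A *m y) i 0 <= 0 * b i 0) -> dl <= dotv c y.
    by move=> y Vy Ay; apply: rec => // i; have := Ay i; rewrite mul0r.
  have HMQ : forall p, (V p /\ forall o, o \in sI -> gf o p <= 0) -> M <= phi p.
    move=> [y t] Qp; have [t0 Ay] := inQ _ _ Qp.
    have [tz|tnz] := eqVneq t 0.
      subst t; apply: le_trans (HM _ Dxp dxp) _; apply: le_trans gxp _.
      exact: t0case Qp.1 Ay.
    have tp : 0 < t by rewrite lt_neqAle eq_sym tnz.
    have [[Dx dx] gz] := fromQ y t tp Qp.1 Ay.
    by rewrite /phi /= -gz; exact: HM.
  have [[y t] [Qp Hmin]] := LPattain aphi ag V aV (ex_intro _ (px xp) (Qpx _ Dxp dxp))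
    (ex_intro _ M HMQ).
  have [t0 Ay] := inQ _ _ Qp.
  have [tz|tnz] := eqVneq t 0.
    subst t; exists xp; split => // x Dx dx.
    apply: le_trans gxp _; apply: le_trans (t0case _ Qp.1 Ay) _.
    by rewrite -phipx; apply: Hmin; apply: Qpx.
  have tp : 0 < t by rewrite lt_neqAle eq_sym tnz.
  have [Sz gz] := fromQ y t tp Qp.1 Ay.
  exists (t^-1 *: y); split => // x Dx dx.
  by rewrite gz -phipx; apply: (Hmin (px x)); apply: Qpx.
have root_nonneg : forall r, fpar D c d r = (0:R)%:E -> forall x, D x -> 0 <= dotv (c - r *: d) x.
  move=> r hr x Dx; rewrite -lee_fin -hr; apply: ereal_inf_lbound; by exists x.
have rootz : forall z, D z -> 0 < dotv d z -> (forall x, D x -> 0 < dotv d x -> g z <= g x) ->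
    (forall x, D x -> 0 <= dotv (c - g z *: d) x) /\ fpar D c d (g z) = (0:R)%:E /\
    ratio_opt D c d = (g z)%:E.
  move=> z Dz dz zmin.
  have psi0 : dotv (c - g z *: d) z = 0.
    by rewrite dotv_subl /g; field; exact: lt0r_neq0.
  have pos : forall x, D x -> 0 < dotv d x -> 0 <= dotv (c - g z *: d) x.
    move=> x Dx dx; have := zmin x Dx dx; rewrite dotv_subl {2}/g ler_pdivlMr // subr_ge0.
    done.
  have nn : forall x, D x -> 0 <= dotv (c - g z *: d) x.
    move=> x Dx; case: (ltrP 0 (dotv d x)) => dx; first exact: pos.
    pose l := dotv d z / (2 * (dotv d z - dotv d x)).
    have hd : 0 < dotv d z - dotv d x by lra.
    have l0 : 0 < l by apply: divr_gt0 => //; lra.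
    have l1 : l <= 1 by rewrite /l ler_pdivrMr; [lra | lra].
    have eql : l * (dotv d z - dotv d x) = dotv d z / 2.
      by rewrite /l; field; rewrite gt_eqF.
    pose w := (1 - l) *: z + l *: x.
    have Dw : D w.
      rewrite HD /= => i; rewrite /w AmxD !AmxZ.
      have : (A *m z) i 0 <= b i 0 by move: Dz; rewrite HD => /(_ i).
      have : (A *m x) i 0 <= b i 0 by move: Dx; rewrite HD => /(_ i).
      nra.
    have dw : 0 < dotv d w.
      rewrite /w dotvD !dotvZ.
      have -> : (1 - l) * dotv d z + l * dotv d x = dotv d z - l * (dotv d z - dotv d x) by ring.
      rewrite eql; lra.
    have := pos w Dw dw.
    rewrite /w !dotv_subl !dotvD !dotvZ.
    move: psi0; rewrite !dotv_subl => psi0.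
    have -> : (1 - l) * dotv c z + l * dotv c x - g z * ((1 - l) * dotv d z + l * dotv d x)
       = (1 - l) * (dotv c z - g z * dotv d z) + l * (dotv c x - g z * dotv d x) by ring.
    rewrite psi0 mulr0 add0r => h.
    by rewrite pmulr_rge0 in h.
  split => //; split.
    apply: le_anti; apply/andP; split.
      by rewrite -psi0; apply: ereal_inf_lbound; exists z.
    by apply: le_ereal_inf_tmp => y [x Dx <-]; rewrite lee_fin; apply: nn.
  apply: le_anti; apply/andP; split.
    by apply: ereal_inf_lbound; exists z.
  apply: le_ereal_inf_tmp => y [x [Dx dx] <-]; rewrite lee_fin; exact: zmin.
split.
  move=> [r0 hr0].
  have [z [[Dz dz] zmin]] : exists z, (D z /\ 0 < dotv d z) /\ forall x, D x -> 0 < dotv d x -> g z <= g x.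
    apply: key; exists r0 => x Dx dx.
    have := root_nonneg _ hr0 x Dx; rewrite dotv_subl subr_ge0 => h.
    by rewrite /g ler_pdivlMr.
  have [nn [fz rz]] := rootz z Dz dz zmin.
  exists (g z); split => //; split.
    move=> r hr; have := root_nonneg _ hr z Dz; rewrite dotv_subl subr_ge0 => h.
    by rewrite /g ler_pdivlMr.
  by split => //; exists z.
move=> nr.
have hlb : forall x, D x -> 0 < dotv d x -> (ratio_opt D c d <= (g x)%:E)%E.
  by move=> x Dx dx; apply: ereal_inf_lbound; exists x.
have hle := hlb xp Dxp dxp.
move: hle hlb; case: (ratio_opt D c d) => [r| |] // hle hlb.
exfalso; apply: nr.
have [z [[Dz dz] zmin]] : exists z, (D z /\ 0 < dotv d z) /\ forall x, D x -> 0 < dotv d x -> g z <= g x.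
  by apply: key; exists r => x Dx dx; rewrite -lee_fin; apply: hlb.
have [_ [fz _]] := rootz z Dz dz zmin.
by exists (g z).
Qed.
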